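(* Every LSGA net is a structural conflict net.
   Context: A Petri net $N=(S,T,F,M_0,\ell)$ has disjoint $S,T$, $F:(S\times T)\cup(T\times S)\to\mathbb N$, $M_0\in\mathbb N^S$, labelling $\ell$. ${}^\bullet x(y)=F(y,x)$, $x^\bullet(y)=F(x,y)$. For a finite nonempty multiset $G$ of transitions, $M[G\rangle M'$ iff ${}^\bullet G\le M$ and $M'=M-{}^\bullet G+G^\bullet$; $t\smile u$ iff $M[\{t\}+\{u\}\rangle$ for some reachable $M$. $N$ is a structural conflict net iff $t\smile u$ implies ${}^\bullet t\cap{}^\bullet u=\emptyset$. A component with interface is $(N,I,O)$ with $I,O\subseteq S$, $I\cap O=\emptyset$ and $o^\bullet=\emptyset$ for $o\in O$; it is sequential iff there is $Q\subseteq S\setminus(I\cup O)$ with $|{}^\bullet t\restriction Q|=|t^\bullet\restriction Q|=1$ for all $t\in T$ and $|M_0\restriction Q|=1$. For components $((S_k,T_k,F_k,M_{0k},\ell_k),I_k,O_k)$, $k\in K$, with $(S_k\cup T_k)\cap(S_l\cup T_l)=(I_k\cup O_k)\cap(I_l\cup O_l)$ and $I_k\cap I_l=\emptyset$ for $k\ne l$, the asynchronous parallel composition is $((\bigcup S_k,\bigcup T_k,\bigcup F_k,\sum M_{0k},\bigcup\ell_k),\bigcup I_k,\bigcup O_k\setminus\bigcup I_k)$. $N$ is an LSGA net iff $(N,I,O)$ equals the asynchronous parallel composition of some family of sequential components, for some $I,O$. *)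

(* Defs.v *)
From Stdlib Require Import List.
Import ListNotations.
Set Implicit Arguments.

Section Nets.
Variables (U Act : Type).

(* Places/transitions are predicates on U;
   F is the arc-weight function, extended by 0 outside (S x T) u (T x S);
   M0 is the initial marking (0 outside S); lab is the labelling
   (only its values on T are meaningful). *)
Record net := Net {
  places : U -> Prop;
  trans  : U -> Prop;
  flow   : U -> U -> nat;
  init   : U -> nat;
  lab    : U -> Act }.

Definition is_net (N : net) : Prop :=
  (forall x, ~ (places N x /\ trans N x)) /\
  (forall x y, flow N x y <> 0 ->
     (places N x /\ trans N y) \/ (trans N x /\ places N y)) /\
  (forall s, init N s <> 0 -> places N s).

Definition marking := U -> nat.

(* A finite multiset of transitions, represented by a list. *)
Definition preset (N : net) (G : list U) : marking :=
  fun s => fold_right (fun t acc => flow N s t + acc) 0 G.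
Definition postset (N : net) (G : list U) : marking :=
  fun s => fold_right (fun t acc => flow N t s + acc) 0 G.

Definition fires (N : net) (M : marking) (G : list U) (M' : marking) : Prop :=
  G <> [] /\ (forall t, In t G -> trans N t) /\
  (forall s, preset N G s <= M s) /\
  (forall s, M' s = M s - preset N G s + postset N G s).

Inductive reachable (N : net) : marking -> Prop :=
| reach_init : reachable N (init N)
| reach_step : forall M G M', reachable N M -> fires N M G M' -> reachable N M'.

Definition concurrent (N : net) (t u : U) : Prop :=
  exists M M', reachable N M /\ fires N M [t; u] M'.

Definition structural_conflict_net (N : net) : Prop :=
  forall t u, concurrent N t u ->
    forall s, ~ (flow N s t <> 0 /\ flow N s u <> 0).

Record component := Comp { cnet : net; cI : U -> Prop; cO : U -> Prop }.

Definition is_component (C : component) : Prop :=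
  is_net (cnet C) /\
  (forall x, cI C x -> places (cnet C) x) /\
  (forall x, cO C x -> places (cnet C) x) /\
  (forall x, ~ (cI C x /\ cO C x)) /\
  (forall o, cO C o -> forall y, flow (cnet C) o y = 0).

Definition size_one_on (Q : U -> Prop) (f : U -> nat) : Prop :=
  exists s, Q s /\ f s = 1 /\ forall s', Q s' -> s' <> s -> f s' = 0.

Definition sequential (C : component) : Prop :=
  exists Q : U -> Prop,
    (forall q, Q q -> places (cnet C) q /\ ~ cI C q /\ ~ cO C q) /\
    (forall t, trans (cnet C) t -> size_one_on Q (fun s => flow (cnet C) s t)) /\
    (forall t, trans (cnet C) t -> size_one_on Q (fun s => flow (cnet C) t s)) /\
    size_one_on Q (init (cnet C)).

Definition composable (K : Type) (C : K -> component) : Prop :=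
  forall k l, k <> l ->
    (forall x,
       ((places (cnet (C k)) x \/ trans (cnet (C k)) x) /\
        (places (cnet (C l)) x \/ trans (cnet (C l)) x)) <->
       ((cI (C k) x \/ cO (C k) x) /\ (cI (C l) x \/ cO (C l) x))) /\
    (forall x, ~ (cI (C k) x /\ cI (C l) x)).

Definition in_dom (N : net) (x y : U) : Prop :=
  (places N x /\ trans N y) \/ (trans N x /\ places N y).


Definition is_async_comp (K : Type) (C : K -> component) (N : net)
    (I O : U -> Prop) : Prop :=
  (forall x, places N x <-> exists k, places (cnet (C k)) x) /\
  (forall x, trans N x <-> exists k, trans (cnet (C k)) x) /\
  (forall k x y, in_dom (cnet (C k)) x y -> flow N x y = flow (cnet (C k)) x y) /\
  (forall x y, (forall k, ~ in_dom (cnet (C k)) x y) -> flow N x y = 0) /\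
  (forall s, exists ks : list K, NoDup ks /\
       (forall k, init (cnet (C k)) s <> 0 -> In k ks) /\
       init N s = fold_right (fun k acc => init (cnet (C k)) s + acc) 0 ks) /\
  (forall k t, trans (cnet (C k)) t -> lab N t = lab (cnet (C k)) t) /\
  (forall x, I x <-> exists k, cI (C k) x) /\
  (forall x, O x <-> ((exists k, cO (C k) x) /\ ~ exists k, cI (C k) x)).

Definition LSGA_net (N : net) : Prop :=
  exists (I O : U -> Prop) (K : Type) (C : K -> component),
    (forall k, is_component (C k)) /\
    (forall k, sequential (C k)) /\
    composable C /\
    is_async_comp C N I O.

End Nets.

(* Main.v *)
Require Import Defs.
From Stdlib Require Import List Lia Classical Arith PeanoNat.
Import ListNotations.

Lemma fold_zero (K : Type) (f : K -> nat) (k : K) (ks : list K) :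
  ~ In k ks -> (forall k', k' <> k -> f k' = 0) ->
  fold_right (fun k acc => f k + acc) 0 ks = 0.
Proof.
  induction ks as [|k1 ks IH]; simpl; intros Hn Hz; auto.
  rewrite Hz by (intro E; apply Hn; left; auto).
  rewrite IH; auto.
Qed.

Lemma fold_single (K : Type) (f : K -> nat) (k : K) (ks : list K) :
  NoDup ks -> (forall k', k' <> k -> f k' = 0) -> (f k <> 0 -> In k ks) ->
  fold_right (fun k acc => f k + acc) 0 ks = f k.
Proof.
  induction ks as [|k1 ks IH]; simpl; intros Hnd Hz Hin.
  - destruct (Nat.eq_dec (f k) 0); auto. destruct (Hin n).
  - inversion Hnd; subst.
    destruct (classic (k1 = k)) as [E|E].
    + subst. rewrite (@fold_zero K f k ks); auto.
    + rewrite Hz by auto. simpl. apply IH; auto.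
      intro H. destruct (Hin H); congruence.
Qed.

Theorem corollary4p14 (U Act : Type) (N : net U Act) :
  is_net N -> LSGA_net N -> structural_conflict_net N.
Proof.
  intros HN [I [O [K [C [Hcomp [Hseq [Hcompos Hasync]]]]]]].
  destruct Hasync as [HP [HT [HF [HF0 [Hinit [Hlab [HI HO]]]]]]].
  destruct HN as [HNdisj [HNflow HNinit]].
  assert (F1 : forall k l x, k <> l ->
     (places (cnet (C k)) x \/ trans (cnet (C k)) x) ->
     (places (cnet (C l)) x \/ trans (cnet (C l)) x) ->
     (cI (C k) x \/ cO (C k) x) /\ (cI (C l) x \/ cO (C l) x)).
  { intros k l x kl H1 H2. apply (proj1 (Hcompos k l kl) x). auto. }
  assert (F2 : forall k l t, trans (cnet (C k)) t -> trans (cnet (C l)) t -> k = l).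
  { intros k l t H1 H2. apply NNPP; intro kl.
    destruct (F1 k l t kl (or_intror H1) (or_intror H2)) as [[Hi|Ho] _];
    destruct (Hcomp k) as [[Hd _] [HcI [HcO _]]].
    - apply (Hd t); auto.
    - apply (Hd t); auto. }
  intros t u [M [M' [Hreach Hfire]]] s [Hst Hsu].
  assert (Inv : forall M, reachable N M -> forall k, exists Q : U -> Prop,
     (forall q, Q q -> places (cnet (C k)) q /\ ~ cI (C k) q /\ ~ cO (C k) q) /\
     (forall t, trans (cnet (C k)) t -> size_one_on Q (fun s => flow N s t)) /\
     size_one_on Q M).
  { intros M0 HR k.
    destruct (Hseq k) as [Q [HQ [Hpre [Hpost Hin0]]]].
    assert (F3 : forall q l, Q q -> places (cnet (C l)) q -> l = k).
    { intros q l Hq Hpl. apply NNPP; intro lk.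
      destruct (HQ q Hq) as [Hp [Hni Hno]].
      destruct (F1 k l q (fun e => lk (eq_sym e)) (or_introl Hp) (or_introl Hpl))
        as [[?|?] _]; auto. }
    assert (F4in : forall q t, Q q -> trans (cnet (C k)) t ->
               flow N q t = flow (cnet (C k)) q t).
    { intros q t0 Hq Ht. apply HF. left. split; auto. apply HQ; auto. }
    assert (F4out : forall q t, Q q -> trans (cnet (C k)) t ->
               flow N t q = flow (cnet (C k)) t q).
    { intros q t0 Hq Ht. apply HF. right. split; auto. apply HQ; auto. }
    assert (F5in : forall q t, Q q -> ~ trans (cnet (C k)) t -> flow N q t = 0).
    { intros q t0 Hq Ht. apply NNPP; intro Hne.
      apply Hne. apply HF0. intros k' Hd.
      destruct Hd as [[Hp Htr]|[Htr Hp]].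
      - assert (k' = k) by (apply (F3 q); auto). subst. auto.
      - apply (HNdisj q). split.
        + apply HP. exists k. apply HQ; auto.
        + apply HT. eauto. }
    assert (F5out : forall q t, Q q -> ~ trans (cnet (C k)) t -> flow N t q = 0).
    { intros q t0 Hq Ht. apply NNPP; intro Hne.
      apply Hne. apply HF0. intros k' Hd.
      destruct Hd as [[Hp Htr]|[Htr Hp]].
      - apply (HNdisj q). split.
        + apply HP. exists k. apply HQ; auto.
        + apply HT. eauto.
      - assert (k' = k) by (apply (F3 q); auto). subst. auto. }
    assert (Pre : forall t, trans (cnet (C k)) t -> size_one_on Q (fun s => flow N s t)).
    { intros t0 Ht. destruct (Hpre t0 Ht) as [a [Ha [H1 H2]]].
      exists a. split; auto. simpl. rewrite F4in; auto. split; auto.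
      intros s' Hs' ne. rewrite F4in; auto. }
    assert (Post : forall t, trans (cnet (C k)) t -> size_one_on Q (fun s => flow N t s)).
    { intros t0 Ht. destruct (Hpost t0 Ht) as [a [Ha [H1 H2]]].
      exists a. split; auto. simpl. rewrite F4out; auto. split; auto.
      intros s' Hs' ne. rewrite F4out; auto. }
    exists Q. split; [exact HQ|]. split; [exact Pre|].
    assert (GL : forall G, (forall t, In t G -> trans N t) ->
      (forall q, Q q -> preset N G q = 0 /\ postset N G q = 0) \/
      (exists t, trans (cnet (C k)) t /\ forall q, Q q ->
          preset N G q = flow N q t /\ postset N G q = flow N t q) \/
      ((exists q, Q q /\ 2 <= preset N G q) \/
       (exists q1 q2, Q q1 /\ Q q2 /\ q1 <> q2 /\ 1 <= preset N G q1 /\ 1 <= preset N G q2))).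
    { induction G as [|t1 G IH]; intros HG.
      - left. intros; unfold preset, postset; simpl; auto.
      - assert (IH' := IH (fun t H => HG t (or_intror H))).
        assert (Ep : forall q, preset N (t1 :: G) q = flow N q t1 + preset N G q)
          by (intros; reflexivity).
        assert (Eq : forall q, postset N (t1 :: G) q = flow N t1 q + postset N G q)
          by (intros; reflexivity).
        destruct (classic (trans (cnet (C k)) t1)) as [Ht1|Ht1].
        + destruct (Pre t1 Ht1) as [a [Ha [Fa Fa']]]. cbv beta in Fa, Fa'.
          destruct IH' as [A|[[t' [Ht' B]]|[[q [Hq Cq]]|[q1 [q2 [H1 [H2 [H3 [H4 H5]]]]]]]]].
          * right; left. exists t1. split; auto. intros q Hq.
            rewrite Ep, Eq. destruct (A q Hq). lia.
          * destruct (Pre t' Ht') as [a' [Ha' [Fb Fb']]]. cbv beta in Fb, Fb'.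
            right; right. destruct (classic (a = a')) as [E|E].
            -- subst a'. left. exists a. split; auto. rewrite Ep.
               destruct (B a Ha). lia.
            -- right. exists a, a'. repeat split; auto.
               ++ rewrite Ep. lia.
               ++ rewrite Ep. destruct (B a' Ha'). lia.
          * right; right; left. exists q. split; auto. rewrite Ep. lia.
          * right; right; right. exists q1, q2. repeat split; auto;
              rewrite Ep; lia.
        + destruct IH' as [A|[[t' [Ht' B]]|[[q [Hq Cq]]|[q1 [q2 [H1 [H2 [H3 [H4 H5]]]]]]]]].
          * left. intros q Hq. rewrite Ep, Eq, F5in, F5out by auto.
            destruct (A q Hq); split; lia.
          * right; left. exists t'. split; auto. intros q Hq.
            rewrite Ep, Eq. rewrite (F5in q t1), (F5out q t1) by auto.
            destruct (B q Hq); split; lia.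
          * right; right; left. exists q. split; auto. rewrite Ep. lia.
          * right; right; right. exists q1, q2. repeat split; auto;
              rewrite Ep; lia. }
    induction HR as [|M1 G M2 HR IHR Hf].
    - destruct Hin0 as [q0 [Hq0 [H1 H2]]]. exists q0.
      assert (EI : forall q, Q q -> init N q = init (cnet (C k)) q).
      { intros q Hq. destruct (Hinit q) as [ks [Hnd [Hks Heq]]]. rewrite Heq.
        apply (@fold_single K (fun k0 => init (cnet (C k0)) q) k ks); auto.
        intros k' nk. destruct (Nat.eq_dec (init (cnet (C k')) q) 0); auto.
        exfalso. apply nk. apply (F3 q); auto.
        destruct (Hcomp k') as [[_ [_ Hi]] _]. auto. }
      split; auto. rewrite EI; auto. split; auto. intros. rewrite EI; auto.
    - destruct IHR as [q0 [Hq0 [Mq0 Mz]]].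
      destruct Hf as [_ [HGt [Hle HM']]].
      assert (Mle : forall q, Q q -> M1 q <= 1).
      { intros q Hq. destruct (classic (q = q0)); [subst; lia|]. rewrite Mz; auto. }
      destruct (GL G HGt) as [A|[[t' [Ht' B]]|[[q [Hq Cq]]|[q1 [q2 [H1 [H2 [H3 [H4 H5]]]]]]]]].
      + exists q0. split; auto. rewrite HM'. destruct (A q0 Hq0). split; [lia|].
        intros s' Hs' ne. rewrite HM', Mz by auto. destruct (A s' Hs'). lia.
      + destruct (Pre t' Ht') as [a [Ha [Fa Fa']]].
        destruct (Post t' Ht') as [b [Hb [Fb Fb']]]. cbv beta in Fa, Fa', Fb, Fb'.
        assert (aq : a = q0).
        { apply NNPP; intro ne. specialize (Hle a). rewrite (Mz a Ha ne) in Hle.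
          destruct (B a Ha). lia. }
        subst a.
        exists b. split; auto. split.
        * rewrite HM'. destruct (B b Hb). destruct (classic (b = q0)).
          -- subst. lia.
          -- rewrite Mz by auto; lia.
        * intros s' Hs' ne. rewrite HM'. destruct (B s' Hs').
          rewrite (Fb' s' Hs' ne) in *.
          destruct (classic (s' = q0)).
          -- subst. lia.
          -- rewrite Mz by auto; lia.
      + exfalso. specialize (Hle q). specialize (Mle q Hq). lia.
      + exfalso. assert (q1 = q0).
        { apply NNPP; intro ne. specialize (Hle q1). rewrite Mz in Hle by auto; lia. }
        assert (q2 = q0).
        { apply NNPP; intro ne. specialize (Hle q2). rewrite Mz in Hle by auto; lia. }
        congruence. }
  destruct Hfire as [_ [HGt [Hle _]]].
  assert (Ht : trans N t) by (apply HGt; simpl; auto).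
  assert (Hu : trans N u) by (apply HGt; simpl; auto).
  destruct (proj1 (HT t) Ht) as [k Hk].
  destruct (proj1 (HT u) Hu) as [l Hl].
  assert (Loc : forall k t, trans (cnet (C k)) t -> flow N s t <> 0 ->
     places (cnet (C k)) s /\ flow (cnet (C k)) s t <> 0).
  { intros k0 t0 Hk0 Hne.
    assert (exists k', in_dom (cnet (C k')) s t0) as [k' Hd].
    { apply NNPP; intro Hn. apply Hne. apply HF0. intros k' Hd. apply Hn; eauto. }
    destruct Hd as [[Hp Htr]|[Htr Hp]].
    - assert (k' = k0) by (apply (F2 k' k0 t0); auto). subst.
      split; auto. rewrite <- (HF k0 s t0); auto. left; auto.
    - exfalso. apply (HNdisj t0). split; [apply HP|apply HT]; eauto. }
  destruct (Loc k t Hk Hst) as [Hsk Hfk].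
  destruct (Loc l u Hl Hsu) as [Hsl Hfl].
  destruct (classic (k = l)) as [E|E].
  - subst l. destruct (Inv M Hreach k) as [Q [HQ [Pre [q0 [Hq0 [Mq0 Mz]]]]]].
    destruct (Pre t Hk) as [a [Ha [Fa _]]].
    destruct (Pre u Hl) as [a' [Ha' [Fa' _]]]. cbv beta in Fa, Fa'.
    assert (Ep : forall q, preset N [t; u] q = flow N q t + (flow N q u + 0))
      by reflexivity.
    destruct (classic (a = a')) as [Ea|Ea].
    + subst a'. specialize (Hle a). rewrite Ep in Hle.
      destruct (classic (a = q0)); [subst; lia|]. rewrite Mz in Hle by auto; lia.
    + assert (a = q0).
      { apply NNPP; intro ne. specialize (Hle a). rewrite Ep, Mz in Hle; auto. lia. }
      assert (a' = q0).
      { apply NNPP; intro ne. specialize (Hle a'). rewrite Ep, Mz in Hle; auto. lia. }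
      congruence.
  - destruct (F1 k l s E (or_introl Hsk) (or_introl Hsl)) as [[Ik|Ok] [Il|Ol]].
    + apply (proj2 (Hcompos k l E) s); auto.
    + destruct (Hcomp l) as [_ [_ [_ [_ Hz]]]]. apply Hfl. apply Hz; auto.
    + destruct (Hcomp k) as [_ [_ [_ [_ Hz]]]]. apply Hfk. apply Hz; auto.
    + destruct (Hcomp k) as [_ [_ [_ [_ Hz]]]]. apply Hfk. apply Hz; auto.
Qed.
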